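(* Let $(\mathbb X,d,\delta)$ be a uniform dilation structure and $x\in\mathbb X$. Then there are $r>0$ and $\varepsilon_0>0$ such that for all $\varepsilon\in(0,\varepsilon_0]$ and all $u,v\in B^d(x,r)$ the expression $\Sigma^x_\varepsilon(u,v)=\delta^x_{\varepsilon^{-1}}\delta^{\delta^x_\varepsilon u}_\varepsilon v$ is defined and belongs to $U(x)$.
   Context: A quasimetric space $(\mathbb X,d)$ is a topological space $\mathbb X$ with a map $d:\mathbb X\times\mathbb X\to[0,\infty)$ such that: (i) $d(u,v)=0$ iff $u=v$; (ii) $d(u,v)\le c_{\mathbb X}\,d(v,u)$ for a constant $1\le c_{\mathbb X}<\infty$; (iii) $d(u,v)\le Q_{\mathbb X}(d(u,w)+d(w,v))$ for a constant $1\le Q_{\mathbb X}<\infty$; (iv) $d$ is upper semicontinuous in the first argument. The topology of $\mathbb X$ coincides with the one induced by $d$. $B^d(x,r)=\{y: d(y,x)<r\}$, $\bar B^d(x,r)$ its closure; boundedly compact means closed bounded sets are compact. A dilation structure $(\mathbb X,d,\delta)$ is a complete boundedly compact quasimetric space with $d$ continuous in both arguments, satisfying: (A0) For every $x$ and $\varepsilon\in(0,1]$ there are a neighborhood $U(x)$ of $x$ and homeomorphisms $\delta^x_\varepsilon:U(x)\to V_\varepsilon(x)$, $\delta^x_{\varepsilon^{-1}}:W_{\varepsilon^{-1}}(x)\to U(x)$ with $V_\varepsilon(x)\subseteq W_{\varepsilon^{-1}}(x)\subseteq U(x)$; the family is continuous in $\varepsilon$; there is $R>0$ with $\bar B^d(x,R)\subseteq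 U(x)$ for all $x$, and for all $\varepsilon<1$, $\tilde r>0$ with $\bar B^d(x,\tilde r)\subseteq U(x)$: $B^d(x,\tilde r\varepsilon)\subseteq\delta^x_\varepsilon B^d(x,\tilde r)\subset B^d(x,\tilde r)$. (A1) $\delta^x_\varepsilon x=x$, $\delta^x_1=\mathrm{id}$, $\lim_{\varepsilon\to0}\delta^x_\varepsilon y=x$ for $y\in U(x)$. (A2) $\delta^x_\varepsilon\delta^x_\mu u=\delta^x_{\varepsilon\mu}u$ whenever both sides are defined. (A3) $d^x(u,v)=\lim_{\varepsilon\to0}\frac1\varepsilon d(\delta^x_\varepsilon u,\delta^x_\varepsilon v)$ exists uniformly in $u,v\in\bar B^d(x,R)$. The dilation structure is uniform if the convergence in (A3) is also uniform in $x$ in any compact set. $\Sigma^x_\varepsilon(u,v)$ being defined means $v\in U(\delta^x_\varepsilon u)$ and $\delta^{\delta^x_\varepsilon u}_\varepsilon v\in W_{\varepsilon^{-1}}(x)$. *)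

(* Defs.v *)
From Stdlib Require Import Reals List.
Open Scope R_scope.
Set Implicit Arguments.

Section QuasiMetric.
Variable X : Type.
Variable d : X -> X -> R.

Definition ball (x : X) (r : R) : X -> Prop := fun y => d y x < r.

Definition dopen (O : X -> Prop) : Prop :=
  forall y, O y -> exists r, 0 < r /\ forall z, ball y r z -> O z.

Definition dnbhd (A : X -> Prop) (x : X) : Prop :=
  exists O, dopen O /\ O x /\ forall y, O y -> A y.

Definition dclosure (A : X -> Prop) : X -> Prop :=
  fun y => forall O, dopen O -> O y -> exists a, O a /\ A a.

Definition cball (x : X) (r : R) : X -> Prop := dclosure (ball x r).

Definition dclosed (A : X -> Prop) : Prop := dopen (fun y => ~ A y).

Definition dbounded (A : X -> Prop) : Prop :=
  exists x r, forall y, A y -> ball x r y.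

Definition dcompact (K : X -> Prop) : Prop :=
  forall (I : Type) (O : I -> X -> Prop),
    (forall i, dopen (O i)) ->
    (forall y, K y -> exists i, O i y) ->
    exists l : list I, forall y, K y -> exists i, In i l /\ O i y.

Definition boundedly_compact : Prop :=
  forall A, dclosed A -> dbounded A -> dcompact A.

Definition dcauchy (s : nat -> X) : Prop :=
  forall eta, 0 < eta -> exists N, forall m n, (N <= m)%nat -> (N <= n)%nat ->
    d (s m) (s n) < eta.

Definition dconverges (s : nat -> X) (l : X) : Prop :=
  forall eta, 0 < eta -> exists N, forall n, (N <= n)%nat -> d (s n) l < eta.

Definition dcomplete : Prop :=
  forall s, dcauchy s -> exists l, dconverges s l.

Definition quasimetric : Prop :=
  (forall u v, 0 <= d u v) /\
  (forall u v, d u v = 0 <-> u = v) /\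
  (exists c, 1 <= c /\ forall u v, d u v <= c * d v u) /\
  (exists Q, 1 <= Q /\ forall u v w, d u v <= Q * (d u w + d w v)) /\
  (forall u v eta, 0 < eta ->
     exists O, dopen O /\ O u /\ forall u', O u' -> d u' v < d u v + eta).

Definition d_continuous : Prop :=
  forall a b eta, 0 < eta ->
    exists O1 O2, dopen O1 /\ dopen O2 /\ O1 a /\ O2 b /\
      forall a' b', O1 a' -> O2 b' -> Rabs (d a' b' - d a b) < eta.

Definition homeo (f : X -> X) (A B : X -> Prop) : Prop :=
  (forall a, A a -> B (f a)) /\
  (forall a a', A a -> A a' -> f a = f a' -> a = a') /\
  (forall b, B b -> exists a, A a /\ f a = b) /\
  (forall a, A a -> forall O, dopen O -> O (f a) ->
     exists O', dopen O' /\ O' a /\ forall y, O' y -> A y -> O (f y)) /\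
  (* relative openness, i.e. continuity of the inverse on B *)
  (forall O, dopen O -> exists O', dopen O' /\
     forall b, B b -> ((exists a, A a /\ O a /\ f a = b) <-> O' b)).

End QuasiMetric.

Section Dilations.
Variable X : Type.
Variable d : X -> X -> R.
(* delta x t y = \delta^x_t y, t > 0 *)
Variable delta : X -> R -> X -> X.
Variable U : X -> X -> Prop.
Variable V : X -> R -> X -> Prop.       (* V x eps = V_eps(x), eps in (0,1] *)
Variable W : X -> R -> X -> Prop.       (* W x t = W_t(x), t = eps^{-1} >= 1 *)

Definition ddom (x : X) (t : R) : X -> Prop :=
  if Rle_dec t 1 then U x else W x t.

Definition axioms_A0_A2 (R0 : R) : Prop :=
  (forall x, dnbhd d (U x) x) /\
  (forall x eps, 0 < eps <= 1 ->
     homeo d (delta x eps) (U x) (V x eps) /\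
     homeo d (delta x (/ eps)) (W x (/ eps)) (U x) /\
     (forall y, V x eps y -> W x (/ eps) y) /\
     (forall y, W x (/ eps) y -> U x y)) /\
  (forall x y, U x y -> forall eps, 0 < eps <= 1 ->
     forall O, dopen d O -> O (delta x eps y) ->
       exists eta, 0 < eta /\ forall eps', 0 < eps' <= 1 -> Rabs (eps' - eps) < eta ->
         O (delta x eps' y)) /\
  (forall x y, cball d x R0 y -> U x y) /\
  (forall x eps rt, 0 < eps < 1 -> 0 < rt -> (forall y, cball d x rt y -> U x y) ->
     (forall y, ball d x (rt * eps) y -> exists z, ball d x rt z /\ delta x eps z = y) /\
     (forall z, ball d x rt z -> ball d x rt (delta x eps z))) /\
  (forall x eps, 0 < eps -> ddom x eps x -> delta x eps x = x) /\
  (forall x y, U x y -> delta x 1 y = y) /\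
  (forall x y, U x y -> forall O, dopen d O -> O x ->
     exists eta, 0 < eta /\ forall eps, 0 < eps < eta -> eps <= 1 -> O (delta x eps y)) /\
  (forall x eps mu u, 0 < eps -> 0 < mu ->
     ddom x mu u -> ddom x eps (delta x mu u) -> ddom x (eps * mu) u ->
     delta x eps (delta x mu u) = delta x (eps * mu) u).

Definition axiom_A3 (R0 : R) : Prop :=
  exists dx : X -> X -> X -> R,
    forall x eta, 0 < eta -> exists e1, 0 < e1 /\
      forall eps u v, 0 < eps < e1 -> eps <= 1 ->
        cball d x R0 u -> cball d x R0 v ->
        Rabs (d (delta x eps u) (delta x eps v) / eps - dx x u v) < eta.

Definition axiom_A3_uniform (R0 : R) : Prop :=
  exists dx : X -> X -> X -> R,
    forall K, dcompact d K -> forall eta, 0 < eta -> exists e1, 0 < e1 /\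
      forall x eps u v, K x -> 0 < eps < e1 -> eps <= 1 ->
        cball d x R0 u -> cball d x R0 v ->
        Rabs (d (delta x eps u) (delta x eps v) / eps - dx x u v) < eta.

Definition dilation_structure : Prop :=
  quasimetric d /\ dcomplete d /\ boundedly_compact d /\ d_continuous d /\
  exists R0, 0 < R0 /\ axioms_A0_A2 R0 /\ axiom_A3 R0.

Definition uniform_dilation_structure : Prop :=
  quasimetric d /\ dcomplete d /\ boundedly_compact d /\ d_continuous d /\
  exists R0, 0 < R0 /\ axioms_A0_A2 R0 /\ axiom_A3 R0 /\ axiom_A3_uniform R0.

End Dilations.

(* Main.v *)
Require Import Defs.
From Stdlib Require Import Reals.
From Stdlib Require Import Lra Psatz Classical.
Open Scope R_scope.

Lemma ball_cball (X : Type) (d : X -> X -> R) x r y : ball d x r y -> cball d x r y.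
Proof. intros H O _ HO. exists y. auto. Qed.

Lemma cball_closed (X : Type) (d : X -> X -> R) x r : dclosed d (cball d x r).
Proof.
  unfold dclosed, dopen. intros y Hny.
  unfold cball, dclosure in Hny.
  apply not_all_ex_not in Hny as [O HO].
  apply imply_to_and in HO as [HOo HO].
  apply imply_to_and in HO as [HOy HO].
  destruct (HOo y HOy) as [r0 [Hr0 Hb]].
  exists r0; split; [exact Hr0|].
  intros z Hz Hcz. apply HO.
  apply (Hcz O HOo (Hb z Hz)).
Qed.

Lemma cball_bounded (X : Type) (d : X -> X -> R) x r :
  d_continuous d -> dbounded d (cball d x r).
Proof.
  intros Hdc. exists x, (r+1). intros y Hy.
  destruct (Hdc y x 1 Rlt_0_1) as [O1 [O2 [H1 [H2 [Hy1 [Hx2 Hb]]]]]].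
  destruct (Hy O1 H1 Hy1) as [a [Ha1 Ha]].
  specialize (Hb a x Ha1 Hx2). unfold ball in *.
  apply Rabs_def2 in Hb. lra.
Qed.

Lemma ddom_le (X : Type) (U : X -> X -> Prop) (W : X -> R -> X -> Prop) x e y :
  e <= 1 -> U x y -> ddom U W x e y.
Proof. intros He H. unfold ddom. destruct (Rle_dec e 1); [exact H | lra]. Qed.

Theorem proposition4 (X : Type) (d : X -> X -> R) (delta : X -> R -> X -> X)
  (U : X -> X -> Prop) (V W : X -> R -> X -> Prop) :
  uniform_dilation_structure d delta U V W ->
  forall x : X, exists r eps0, 0 < r /\ 0 < eps0 /\
    forall eps u v, 0 < eps <= eps0 -> ball d x r u -> ball d x r v ->
      U x u /\
      U (delta x eps u) v /\
      W x (/ eps) (delta (delta x eps u) eps v) /\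
      U x (delta x (/ eps) (delta (delta x eps u) eps v)).
Proof.
  intros [Hqm [Hcomp [Hbc [Hdc [R0 [HR0 [HA [HA3 [dx Hdx]]]]]]]]] x.
  destruct Hqm as [Hpos [Hzero [[c [Hc1 Hc]] [[Q [HQ1 HQ]] Husc]]]].
  destruct HA as [HUn [Hhomeo [Hcont [HcU [Hball [HA1a [HA1b [HA1c HA2]]]]]]]].
  assert (Hdd : forall y, d y y = 0) by (intro y; apply Hzero; reflexivity).
  set (K := cball d x R0).
  assert (Kc : dcompact d K) by
    (apply Hbc; [apply cball_closed | apply cball_bounded; exact Hdc]).
  destruct (Hdx K Kc 1 Rlt_0_1) as [e1 [He1 Hu]].
  set (e2 := Rmin (e1/2) (1/2)).
  assert (He2 : 0 < e2 /\ e2 < e1 /\ e2 < 1).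
  { unfold e2. split; [apply Rmin_glb_lt; lra|].
    split; [apply Rle_lt_trans with (e1/2); [apply Rmin_l|lra]
           |apply Rle_lt_trans with (1/2); [apply Rmin_r|lra]]. }
  set (C := R0/e2 + 2).
  assert (HC : 0 < C).
  { unfold C. assert (0 < R0/e2) by (apply Rdiv_lt_0_compat; lra). lra. }
  assert (Hfix : forall y e, 0 < e <= 1 -> U y y -> delta y e y = y).
  { intros y e He Hy. apply HA1a; [lra|]. apply ddom_le; [lra|exact Hy]. }
  assert (HUy : forall y, U y y).
  { intro y. apply HcU. apply ball_cball. unfold ball. rewrite Hdd. exact HR0. }
  assert (Hyy : forall y, ball d y R0 y).
  { intro y. unfold ball. rewrite Hdd. exact HR0. }
  assert (L : forall y z e, K y -> ball d y R0 z -> 0 < e < e1 -> e <= 1 ->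
               d (delta y e z) y < e * C).
  { intros y z e Ky Hz He He'.
    assert (h1 := Hu y e z y Ky He He' (ball_cball _ _ _ _ _ Hz)
                    (ball_cball _ _ _ _ _ (Hyy y))).
    assert (h2 := Hu y e2 z y Ky ltac:(lra) ltac:(lra) (ball_cball _ _ _ _ _ Hz)
                    (ball_cball _ _ _ _ _ (Hyy y))).
    rewrite (Hfix y e ltac:(lra) (HUy y)) in h1.
    rewrite (Hfix y e2 ltac:(lra) (HUy y)) in h2.
    destruct (Hball y e2 R0 ltac:(lra) HR0 (HcU y)) as [_ Hb].
    specialize (Hb z Hz). unfold ball in Hb.
    apply Rabs_def2 in h1. apply Rabs_def2 in h2.
    assert (h3 : d (delta y e2 z) y / e2 < R0 / e2).
    { unfold Rdiv. apply Rmult_lt_compat_r; [apply Rinv_0_lt_compat; lra|exact Hb]. }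
    assert (h4 : d (delta y e z) y / e < C) by (unfold C; lra).
    replace (d (delta y e z) y) with (e * (d (delta y e z) y / e)) by (field; lra).
    apply Rmult_lt_compat_l; lra. }
  assert (L2 : forall y v e mu, K y -> 0 < mu < 1 -> ball d y (R0 * mu) v ->
               0 < e < e1 -> e <= 1 -> d (delta y e v) y < e * mu * C).
  { intros y v e mu Ky Hmu Hv He He'.
    destruct (Hball y mu R0 Hmu HR0 (HcU y)) as [Ha Hb].
    destruct (Ha v Hv) as [z [Hz Hzv]]. subst v.
    rewrite HA2; try lra.
    - apply L; auto; try split; try nra.
    - apply ddom_le; [lra|]. apply HcU, ball_cball, Hz.
    - apply ddom_le; [lra|]. apply HcU, ball_cball, Hb, Hz.
    - apply ddom_le; [nra|]. apply HcU, ball_cball, Hz. }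
  set (mu := Rmin (1/2) (R0/(4*Q*C))).
  assert (Hmu : 0 < mu /\ mu <= 1/2 /\ mu <= R0/(4*Q*C)).
  { unfold mu. split; [apply Rmin_glb_lt; [lra| apply Rdiv_lt_0_compat; nra]|].
    split; [apply Rmin_l|apply Rmin_r]. }
  assert (HmuQ : Q * mu * C <= R0/4).
  { destruct Hmu as [_ [_ h]].
    apply Rmult_le_compat_l with (r := Q*C) in h; [|nra].
    replace (Q*C*(R0/(4*Q*C))) with (R0/4) in h by (field; nra). nra. }
  set (r := R0*mu/(2*Q)).
  assert (Hr : r * (2*Q) = R0*mu) by (unfold r; field; lra).
  assert (Hr0 : 0 < r) by (unfold r; apply Rdiv_lt_0_compat; nra).
  assert (HQcC : 0 < 4*Q*c*C).
  { assert (0 < Q*c) by nra. assert (0 < Q*c*C) by nra. nra. }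
  set (eps0 := Rmin (Rmin (1/2) (e1/2)) (R0/(4*Q*c*C))).
  assert (He0 : 0 < eps0 /\ eps0 <= 1/2 /\ eps0 <= e1/2 /\ eps0 <= R0/(4*Q*c*C)).
  { unfold eps0. split.
    - apply Rmin_glb_lt; [apply Rmin_glb_lt; lra| apply Rdiv_lt_0_compat; lra].
    - split; [|split].
      + eapply Rle_trans; [apply Rmin_l|apply Rmin_l].
      + eapply Rle_trans; [apply Rmin_l|apply Rmin_r].
      + apply Rmin_r. }
  exists r, eps0. split; [exact Hr0|]. split; [lra|].
  intros eps u v Heps Hu' Hv'.
  assert (Heps1 : 0 < eps < 1) by lra.
  assert (Hepse : 0 < eps < e1) by lra.
  assert (HepsC : Q*c*C*eps <= R0/4).
  { destruct He0 as [_ [_ [_ h]]].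
    assert (h' : eps <= R0/(4*Q*c*C)) by lra.
    apply Rmult_le_compat_l with (r := Q*c*C) in h'; [|nra].
    replace (Q*c*C*(R0/(4*Q*c*C))) with (R0/4) in h' by (field; nra). lra. }
  assert (Hrm : r <= R0 * mu) by nra.
  assert (Kx : K x) by (apply ball_cball, Hyy).
  unfold ball in Hu', Hv'.
  assert (HuU : ball d x (R0*mu) u) by (unfold ball; lra).
  assert (hy := L2 x u eps mu Kx ltac:(lra) HuU Hepse ltac:(lra)).
  set (y := delta x eps u) in *.
  destruct (Hball x eps R0 Heps1 HR0 (HcU x)) as [Hxa Hxb].
  assert (Ky : K y).
  { apply ball_cball. apply Hxb. unfold ball. nra. }
  assert (Hvy : ball d y (R0*mu) v).
  { unfold ball. assert (t1 := HQ v y x). assert (t2 := Hc x y).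
    assert (t3 : c * d y x <= c * (eps*mu*C)) by (apply Rmult_le_compat_l; lra).
    assert (t4 : Q * (c*(eps*mu*C)) <= R0/4*mu) by nra.
    assert (t5 : Q * (d v x + d x y) < Q*r + Q*(c*(eps*mu*C))).
    { assert (d v x + d x y < r + c*(eps*mu*C)) by lra. nra. }
    nra. }
  assert (hw := L2 y v eps mu Ky ltac:(lra) Hvy Hepse ltac:(lra)).
  set (w := delta y eps v) in *.
  assert (Hwx : ball d x (R0*eps) w).
  { unfold ball. assert (t1 := HQ w x y).
    assert (t2 : Q * (d w y + d y x) < Q * (2*(eps*mu*C))).
    { assert (d w y + d y x < 2*(eps*mu*C)) by lra. nra. }
    assert (t3 : Q * (2*(eps*mu*C)) <= R0/2*eps) by nra.
    nra. }
  destruct (Hxa w Hwx) as [z [Hz Hzw]].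
  destruct (Hhomeo x eps ltac:(lra)) as [Hh1 [Hh2 [HVW _]]].
  assert (HWw : W x (/eps) w).
  { apply HVW. rewrite <- Hzw. apply (proj1 Hh1). apply HcU, ball_cball, Hz. }
  split; [apply HcU, ball_cball; unfold ball; nra|].
  split; [apply HcU, ball_cball; unfold ball in *; nra|].
  split; [exact HWw|].
  apply (proj1 Hh2). exact HWw.
Qed.
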